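(* Let $\mathcal{E}\subseteq[5]\times[5]$ be the erasure pattern $$\mathcal{E}=\{(1,2),(1,3),(1,4),(1,5),(2,1),(2,2),(2,3),(3,1),(3,2),(3,3),(4,1),(4,4),(4,5),(5,1),(5,4),(5,5)\},$$ i.e., as a $5\times 5$ array (row $i$, column $j$) with $\star$ marking erasures: row 1: $0\,\star\,\star\,\star\,\star$; rows 2 and 3: $\star\,\star\,\star\,0\,0$; rows 4 and 5: $\star\,0\,0\,\star\,\star$. Then $\mathcal{E}$ is regular for $T_{5\times5}(2,2,0)$, and $\mathcal{E}$ is not correctable in the topology $T_{5\times 5}(2,2,0)$.
   Context: Positions of vectors in $\mathbb{F}^{mn}$ are identified with $[m]\times[n]$, $[k]=\{1,\dots,k\}$. For linear codes $\mathcal{C}_1\subseteq\mathbb{F}^m,\mathcal{C}_2\subseteq\mathbb{F}^n$, $\mathcal{C}_1\otimes\mathcal{C}_2$ is the row span of the Kronecker product of their generator matrices (arrays with all columns in $\mathcal{C}_1$ and all rows in $\mathcal{C}_2$). A code for the topology $T_{m\times n}(a,b,0)$ is a linear code over a finite field $\mathbb{F}$ of the form $\mathcal{C}_{\mathsf{col}}\otimes\mathcal{C}_{\mathsf{row}}$ (i.e., with parity-check matrix a parity-check matrix of $\mathcal{C}_{\mathsf{col}}\otimes\mathcal{C}_{\mathsf{row}}$), where $\mathcal{C}_{\mathsf{col}}$ is a linear $[m,\geq m-a]$ code and $\mathcal{C}_{\mathsf{row}}$ a linear $[n,\geq n-b]$ code over $\mathbb{F}$; $\mathbb{C}_{m\times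 n}(a,b,0)$ is the set of these codes (over any finite field). A code corrects an erasure pattern $\mathcal{E}$ if no two distinct codewords agree on all positions outside $\mathcal{E}$; $\mathcal{E}$ is correctable in $T_{m\times n}(a,b,0)$ if some code in $\mathbb{C}_{m\times n}(a,b,0)$ corrects it. An erasure pattern $\mathcal{E}\subseteq[m]\times[n]$ is regular (for $T_{m\times n}(a,b,0)$) if for all $\mathcal{U}\subseteq[m]$ with $|\mathcal{U}|=u\geq a$ and all $\mathcal{V}\subseteq[n]$ with $|\mathcal{V}|=v\geq b$ one has $|\mathcal{E}\cap(\mathcal{U}\times\mathcal{V})|\leq va+ub-ab$. *)

(* Defs.v *)
From HB Require Import structures.
From mathcomp Require Import all_boot all_order all_algebra all_field.
Set Implicit Arguments. Unset Strict Implicit. Unset Printing Implicit Defensive.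
Import GRing.Theory.
Local Open Scope ring_scope.

(* A linear code C <= F^k is represented by a k x k matrix whose row space is C;
   its dimension is \rank C and v \in C is (v <= C)%MS. *)

Definition tensor_codeword (F : fieldType) (m n : nat)
  (Ccol : 'M[F]_m) (Crow : 'M[F]_n) (X : 'M[F]_(m, n)) : Prop :=
  (forall j : 'I_n, ((col j X)^T <= Ccol)%MS) /\
  (forall i : 'I_m, (row i X <= Crow)%MS).

(* Positions are 'I_m * 'I_n (0-based). The code corrects E iff no two distinct
   codewords agree on all positions outside E. *)
Definition corrects (F : fieldType) (m n : nat)
  (Ccol : 'M[F]_m) (Crow : 'M[F]_n) (E : {set 'I_m * 'I_n}) : Prop :=
  forall X Y : 'M[F]_(m, n),
    tensor_codeword Ccol Crow X -> tensor_codeword Ccol Crow Y ->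
    (forall i j, (i, j) \notin E -> X i j = Y i j) -> X = Y.

Definition correctable (m n a b : nat) (E : {set 'I_m * 'I_n}) : Prop :=
  exists (F : finFieldType) (Ccol : 'M[F]_m) (Crow : 'M[F]_n),
    (m - a <= \rank Ccol)%N /\ (n - b <= \rank Crow)%N /\ corrects Ccol Crow E.

Definition regular (m n a b : nat) (E : {set 'I_m * 'I_n}) : Prop :=
  forall (U : {set 'I_m}) (V : {set 'I_n}),
    (a <= #|U|)%N -> (b <= #|V|)%N ->
    (#|E :&: setX U V| <= #|V| * a + #|U| * b - a * b)%N.

(* The erasure pattern of the statement, listed with 1-based (row, column). *)
Definition E_list : seq (nat * nat) :=
  [:: (1,2); (1,3); (1,4); (1,5); (2,1); (2,2); (2,3); (3,1); (3,2); (3,3);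
      (4,1); (4,4); (4,5); (5,1); (5,4); (5,5)].

Definition E5 : {set 'I_5 * 'I_5} :=
  [set p : 'I_5 * 'I_5 | ((nat_of_ord p.1).+1, (nat_of_ord p.2).+1) \in E_list].

(* Main.v *)
Require Import Defs.
From mathcomp Require Import all_boot all_order all_algebra all_field.
From mathcomp Require Import ring.
Set Implicit Arguments. Unset Strict Implicit. Unset Printing Implicit Defensive.
Import GRing.Theory.
Local Open Scope ring_scope.

Section Core.
Variable F : fieldType.

Lemma nonfree_ker m n (A : 'M[F]_(m,n)) :
  ~~ row_free A -> exists v : 'rV_m, v != 0 /\ v *m A = 0.
Proof.
rewrite -kermx_eq0 => nz.
case: (pickP (fun i => row i (kermx A) != 0)) => [i Hi | H].
  by exists (row i (kermx A)); split => //; rewrite -row_mul mulmx_ker row0.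
case/eqP: nz; apply/row_matrixP => i; rewrite row0; apply/eqP.
by move/negbFE: (H i).
Qed.

Lemma ker_nonfree n (A : 'M[F]_n) (w : 'cV_n) : w != 0 -> A *m w = 0 -> ~~ row_free A.
Proof.
move=> wn Aw; apply/negP; rewrite row_free_unit => U; move/eqP: wn; apply.
by rewrite -(mulKmx U w) Aw mulmx0.
Qed.

Lemma delta_entry m n p q (A : 'M[F]_(m,n)) (B : 'M[F]_(p,q)) a b i j :
  (A *m delta_mx a b *m B) i j = A i a * B b j.
Proof.
rewrite -(@mul_delta_mx _ _ 1 _ (0 : 'I_1) a b) !mulmxA -colE -mulmxA -rowE.
by rewrite !mxE big_ord1 !mxE.
Qed.

Variables G1 G2 : 'M[F]_(3,5).

Definition ip (p : 'I_(3*3)) : 'I_5 := inord (nth 0%N [:: 0; 1; 1; 2; 2; 3; 3; 4; 4]%N p).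
Definition jp (p : 'I_(3*3)) : 'I_5 := inord (nth 0%N [:: 0; 3; 4; 3; 4; 1; 2; 1; 2]%N p).

Definition fM (M : 'M[F]_3) := G1^T *m M *m G2.
Definition Lm := lin_mx fM.
Definition gidx (p : 'I_(3*3)) : 'I_(5*5) := mxvec_index (ip p) (jp p).
Definition Km := colsub gidx (lin_mx (mulmxr G2 \o mulmx G1^T)).

Lemma Km_entry a b p : Km (mxvec_index a b) p = G1 a (ip p) * G2 b (jp p).
Proof.
rewrite /Km /lin_mx /lin1_mx !mxE /= vec_mx_delta /gidx mxvecE.
by rewrite /= delta_entry mxE.
Qed.

Lemma Km_ker (w : 'cV_(3*3)) :
  (forall a b, \sum_p G1 a (ip p) * G2 b (jp p) * w p 0 = 0) -> Km *m w = 0.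
Proof.
move=> H; apply/colP => k; case/mxvec_indexP: k => a b.
rewrite !mxE; rewrite -[RHS](H a b); apply: eq_bigr => p _; by rewrite Km_entry.
Qed.

Lemma Km_sol (w : 'cV_(3*3)) : w != 0 -> Km *m w = 0 ->
  exists M : 'M[F]_3, M != 0 /\ forall p, (G1^T *m M *m G2) (ip p) (jp p) = 0.
Proof.
move=> wn /(ker_nonfree wn) /nonfree_ker [v [vn vK]].
exists (vec_mx v); split.
  apply: contra vn => /eqP e; rewrite -(vec_mxK v) e; apply/eqP/rowP => k; case/mxvec_indexP: k => i j; by rewrite mxvecE !mxE.
move=> p.
have : (v *m Km) 0 p = 0 by rewrite vK mxE.
rewrite -(vec_mxK v).
have -> : (mxvec (vec_mx v) *m Km) 0 p =
   (mxvec (vec_mx v) *m lin_mx (mulmxr G2 \o mulmx G1^T)) 0 (gidx p).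
  by rewrite !mxE; apply: eq_bigr => k _; rewrite !mxE.
by rewrite mul_vec_lin /gidx mxvecE /= vec_mxK.
Qed.

Definition wv (l : seq F) : 'cV[F]_(3*3) := \col_p nth 0 l p.

Section Cases.
Variables c d : 'I_5 -> F.
Notation C k := (c (inord k)).
Notation D k := (d (inord k)).
Definition S (l : seq F) := \sum_p c (ip p) * d (jp p) * wv l p 0.

Lemma caseG s0 s1 s2 s3 t0 t1 t2 t3 :
  s0 * C 1 + s1 * C 2 + s2 * C 3 + s3 * C 4 = 0 ->
  t0 * D 1 + t1 * D 2 + t2 * D 3 + t3 * D 4 = 0 ->
  S [:: 0; s0 * t2; s0 * t3; s1 * t2; s1 * t3; -(s2 * t0); -(s2 * t1); -(s3 * t0); -(s3 * t1)] = 0.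
Proof.
move=> Hs Ht; rewrite /S !big_ord_recl big_ord0 !mxE /= /ip /jp /=.
transitivity ((s0 * C 1 + s1 * C 2 + s2 * C 3 + s3 * C 4) * (t2 * D 3 + t3 * D 4)
  - (s2 * C 3 + s3 * C 4) * (t0 * D 1 + t1 * D 2 + t2 * D 3 + t3 * D 4)); first ring.
by rewrite Hs Ht mul0r mulr0 subr0.
Qed.

Lemma caseA s2 s3 : s2 * C 3 + s3 * C 4 = 0 ->
  S [:: 0; 0; 0; 0; 0; s2; 0; s3; 0] = 0.
Proof.
move=> H; rewrite /S !big_ord_recl big_ord0 !mxE /= /ip /jp /=.
transitivity ((s2 * C 3 + s3 * C 4) * D 1); first ring.
by rewrite H mul0r.
Qed.

Lemma caseB s0 s1 : s0 * C 1 + s1 * C 2 = 0 ->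
  S [:: 0; s0; 0; s1; 0; 0; 0; 0; 0] = 0.
Proof.
move=> H; rewrite /S !big_ord_recl big_ord0 !mxE /= /ip /jp /=.
transitivity ((s0 * C 1 + s1 * C 2) * D 3); first ring.
by rewrite H mul0r.
Qed.

Lemma caseC t2 t3 : t2 * D 3 + t3 * D 4 = 0 ->
  S [:: 0; t2; t3; 0; 0; 0; 0; 0; 0] = 0.
Proof.
move=> H; rewrite /S !big_ord_recl big_ord0 !mxE /= /ip /jp /=.
transitivity (C 1 * (t2 * D 3 + t3 * D 4)); first ring.
by rewrite H mulr0.
Qed.

Lemma caseD t0 t1 : t0 * D 1 + t1 * D 2 = 0 ->
  S [:: 0; 0; 0; 0; 0; t0; t1; 0; 0] = 0.
Proof.
move=> H; rewrite /S !big_ord_recl big_ord0 !mxE /= /ip /jp /=.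
transitivity (C 3 * (t0 * D 1 + t1 * D 2)); first ring.
by rewrite H mulr0.
Qed.
End Cases.


Lemma wv_nz l k : (k < 3*3)%N -> nth 0 l k != 0 -> wv l != 0.
Proof.
move=> hk h; apply: contra h => /eqP e; move/colP/(_ (Ordinal hk)): e.
by rewrite !mxE => ->.
Qed.

Notation o1 := (lift ord0 (ord0 : 'I_3)).
Notation o2 := (lift ord0 (lift ord0 (ord0 : 'I_2))).
Notation o3 := (lift ord0 (lift ord0 (lift ord0 (ord0 : 'I_1)))).

Lemma rV4_nz (s : 'rV[F]_4) : s != 0 ->
  ~~ [&& s 0 ord0 == 0, s 0 o1 == 0, s 0 o2 == 0 & s 0 o3 == 0].
Proof.
apply: contra => /and4P[/eqP h0 /eqP h1 /eqP h2 /eqP h3]; apply/eqP/rowP => k.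
rewrite mxE; case: k => [[|[|[|[|//]]]] Hk].
- by rewrite -h0; congr (s 0 _); apply/val_inj.
- by rewrite -h1; congr (s 0 _); apply/val_inj.
- by rewrite -h2; congr (s 0 _); apply/val_inj.
- by rewrite -h3; congr (s 0 _); apply/val_inj.
Qed.

Lemma dep4 (G : 'M[F]_(3,5)) : exists s : 'rV[F]_4, s != 0 /\
  forall a, s 0 ord0 * G a (inord 1) + s 0 o1 * G a (inord 2)
          + s 0 o2 * G a (inord 3) + s 0 o3 * G a (inord 4) = 0.
Proof.
have [s [sn sK]] : exists s : 'rV[F]_4, s != 0 /\
    s *m (\matrix_(k < 4, a < 3) G a (inord k.+1)) = 0.
  apply: nonfree_ker; rewrite -row_leq_rank; apply/negP => h.
  by have := leq_trans h (rank_leq_col _).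
exists s; split => // a.
move/rowP/(_ a): sK; rewrite !mxE => <-.
rewrite !big_ord_recl big_ord0 !mxE /=; ring.
Qed.

Lemma w_exists : exists w : 'cV[F]_(3*3), w != 0 /\
  forall a b, \sum_p G1 a (ip p) * G2 b (jp p) * w p 0 = 0.
Proof.
have [s [sn Hs]] := dep4 G1.
have [t [tn Ht]] := dep4 G2.
have s4 := rV4_nz sn; have t4 := rV4_nz tn.
case: (boolP ((s 0 ord0 == 0) && (s 0 o1 == 0))) => [/andP[/eqP z0 /eqP z1] | nz01].
  exists (wv [:: 0; 0; 0; 0; 0; s 0 o2; 0; s 0 o3; 0]); split.
    move: s4; rewrite z0 z1 eqxx /= => /nandP [h|h].
      exact: (@wv_nz _ 5).
    exact: (@wv_nz _ 7).
  move=> a b; apply: (@caseA (fun i => G1 a i) (fun j => G2 b j)).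
  by move: (Hs a); rewrite z0 z1 !mul0r !add0r.
case: (boolP ((s 0 o2 == 0) && (s 0 o3 == 0))) => [/andP[/eqP z2 /eqP z3] | nz23].
  exists (wv [:: 0; s 0 ord0; 0; s 0 o1; 0; 0; 0; 0; 0]); split.
    move/nandP: nz01 => [h|h].
      exact: (@wv_nz _ 1).
    exact: (@wv_nz _ 3).
  move=> a b; apply: (@caseB (fun i => G1 a i) (fun j => G2 b j)).
  by move: (Hs a); rewrite z2 z3 !mul0r !addr0.
case: (boolP ((t 0 ord0 == 0) && (t 0 o1 == 0))) => [/andP[/eqP z0 /eqP z1] | nt01].
  exists (wv [:: 0; t 0 o2; t 0 o3; 0; 0; 0; 0; 0; 0]); split.
    move: t4; rewrite z0 z1 eqxx /= => /nandP [h|h].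
      exact: (@wv_nz _ 1).
    exact: (@wv_nz _ 2).
  move=> a b; apply: (@caseC (fun i => G1 a i) (fun j => G2 b j)).
  by move: (Ht b); rewrite z0 z1 !mul0r !add0r.
case: (boolP ((t 0 o2 == 0) && (t 0 o3 == 0))) => [/andP[/eqP z2 /eqP z3] | nt23].
  exists (wv [:: 0; 0; 0; 0; 0; t 0 ord0; t 0 o1; 0; 0]); split.
    move/nandP: nt01 => [h|h].
      exact: (@wv_nz _ 5).
    exact: (@wv_nz _ 6).
  move=> a b; apply: (@caseD (fun i => G1 a i) (fun j => G2 b j)).
  by move: (Ht b); rewrite z2 z3 !mul0r !addr0.
exists (wv [:: 0; s 0 ord0 * t 0 o2; s 0 ord0 * t 0 o3; s 0 o1 * t 0 o2; s 0 o1 * t 0 o3;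
   -(s 0 o2 * t 0 ord0); -(s 0 o2 * t 0 o1); -(s 0 o3 * t 0 ord0); -(s 0 o3 * t 0 o1)]); split.
  move/nandP: nz01 => [h|h]; move/nandP: nt23 => [h'|h'].
  - by apply: (@wv_nz _ 1) => //=; rewrite mulf_neq0.
  - by apply: (@wv_nz _ 2) => //=; rewrite mulf_neq0.
  - by apply: (@wv_nz _ 3) => //=; rewrite mulf_neq0.
  - by apply: (@wv_nz _ 4) => //=; rewrite mulf_neq0.
move=> a b; apply: (@caseG (fun i => G1 a i) (fun j => G2 b j)).
  exact: Hs.
exact: Ht.
Qed.

Lemma core :
  exists M : 'M[F]_3, M != 0 /\ forall p, (G1^T *m M *m G2) (ip p) (jp p) = 0.
Proof.
have [w [wn Hw]] := w_exists.
exact: (Km_sol wn (Km_ker Hw)).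
Qed.
End Core.
Lemma memE5 x : (x \in E5) = (((x.1:nat).+1, (x.2:nat).+1) \in E_list).
Proof. by rewrite inE. Qed.

Ltac exk k := by exists (inord k); split; apply/val_inj; rewrite /ip /jp /= !inordK.

Lemma cover (i j : 'I_5) : (i,j) \notin E5 -> exists p, ip p = i /\ jp p = j.
Proof.
rewrite memE5 /=.
case: i => [[|[|[|[|[|//]]]]] Hi]; case: j => [[|[|[|[|[|//]]]]] Hj] //= _.
all: first [exk 0%N | exk 1%N | exk 2%N | exk 3%N | exk 4%N | exk 5%N | exk 6%N | exk 7%N | exk 8%N].
Qed.

Local Close Scope ring_scope.
Lemma cardS (T : finType) (A : {set T}) : #|A| = \sum_x (x \in A).
Proof. by rewrite -sum1_card big_mkcond /=; apply: eq_bigr => x _; case: (x \in A). Qed.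

Lemma regular_E5 : regular 2 2 E5.
Proof.
move=> U V.
have -> : #|E5 :&: setX U V| = \sum_(i : 'I_5) \sum_(j : 'I_5)
    ((((i:nat).+1,(j:nat).+1) \in E_list) && (i \in U) && (j \in V)).
  rewrite cardS pair_bigA; apply: eq_bigr => -[i j] _.
  by rewrite in_setI in_setX memE5 andbA.
rewrite !cardS !big_ord_recl !big_ord0 /=.
do 10 (move: (_ \in U) || move: (_ \in V)).
do 10 case.
all: by [].
Qed.

Local Open Scope ring_scope.
Lemma base3 (F : fieldType) (C : 'M[F]_5) : (3 <= \rank C)%N ->
  exists G : 'M[F]_(3,5), row_free G /\ (G <= C)%MS.
Proof.
move=> hC; exists (pid_mx 3 *m row_base C); split.
  by rewrite -row_leq_rank mxrankMfree ?row_base_free // rank_pid_mx.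
by rewrite (submx_trans (submxMl _ _)) // eq_row_base.
Qed.

Lemma codeword (F : fieldType) (Ccol Crow : 'M[F]_5) (G1 G2 : 'M[F]_(3,5)) N :
  (G1 <= Ccol)%MS -> (G2 <= Crow)%MS ->
  tensor_codeword Ccol Crow (G1^T *m N *m G2).
Proof.
move=> h1 h2; split.
  move=> j; rewrite colE -!mulmxA trmx_mul trmxK.
  exact: submx_trans (submxMl _ _) h1.
move=> i; rewrite row_mul.
exact: submx_trans (submxMl _ _) h2.
Qed.

Lemma not_corr : ~ correctable 2 2 E5.
Proof.
move=> [F [Ccol [Crow [hc [hr hC]]]]].
have [G1 [f1 s1]] := base3 hc.
have [G2 [f2 s2]] := base3 hr.
have [M [Mn HM]] := core G1 G2.
have X0 := hC _ _ (codeword M s1 s2) (codeword 0 s1 s2).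
have : G1^T *m M *m G2 = G1^T *m 0 *m G2.
  apply: X0 => i j /cover [p [<- <-]].
  by rewrite HM mulmx0 mul0mx mxE.
rewrite mulmx0 mul0mx -(mul0mx _ G2) => /(row_free_inj f2).
move/(congr1 trmx); rewrite trmx_mul trmxK trmx0 -(mul0mx _ G1) => /(row_free_inj f1).
by move/(congr1 trmx); rewrite trmxK trmx0 => /eqP; rewrite (negbTE Mn).
Qed.

Theorem lemma4 : regular 2 2 E5 /\ ~ correctable 2 2 E5.
Proof. split; [exact: regular_E5 | exact: not_corr]. Qed.
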